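(* Let $p$ be $(12,\emptyset,\{0,1\})$ or $(12,\emptyset,\{0,2\})$, or any pattern in the same symmetry class as one of these. Then for all $n\ge2$, $a_n(p)=n!/2$.
   Context: For $n\ge1$, $\mathcal S_n$ is the set of permutations $\pi=\pi_1\cdots\pi_n$ of $[n]$. A bi-vincular pattern of length $k$ is a triple $p=(\sigma,X,Y)$ with $\sigma\in\mathcal S_k$ and $X,Y\subseteq\{0,1,\dots,k\}$. A permutation $\pi\in\mathcal S_n$ contains $p$ if there are indices $1\le i_1<\dots<i_k\le n$ such that $(\pi_{i_1},\dots,\pi_{i_k})$ is order-isomorphic to $\sigma$ and, letting $j_1<\dots<j_k$ be the values $\pi_{i_1},\dots,\pi_{i_k}$ sorted increasingly and setting $i_0=j_0=0$, $i_{k+1}=j_{k+1}=n+1$, one has $i_{x+1}=i_x+1$ for all $x\in X$ and $j_{y+1}=j_y+1$ for all $y\in Y$. Otherwise $\pi$ avoids $p$; $a_n(p)$ is the number of $\pi\in\mathcal S_n$ avoiding $p$. Symmetries: $p^{i}=(\sigma^{-1},Y,X)$, $p^{r}=(\sigma^{r},\{k-x:x\in X\},Y)$, $p^{c}=(\sigma^{c},X,\{k-y:y\in Y\})$ with $\sigma^r_j=\sigma_{k+1-j}$, $\sigma^c_j=k+1-\sigma_j$; the symmetry class of $p$ consists of all patterns obtained from $p$ by finitely many applications of these maps. *)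

(* Defs.v *)
From HB Require Import structures.
From mathcomp Require Import all_boot all_fingroup.
Set Implicit Arguments. Unset Strict Implicit. Unset Printing Implicit Defensive.

(* Bi-vincular pattern (sigma, X, Y) of length k: sigma : 'S_k acts on
   {0,..,k-1} (value v stands for v+1), and X, Y are subsets of {0,..,k}. *)
Record bvpat := BVPat {
  bk : nat;
  bsig : 'S_bk;
  bX : {set 'I_bk.+1};
  bY : {set 'I_bk.+1} }.

(* 1-based positions i_0 = 0, i_1 < ... < i_k, i_{k+1} = n+1 of an occurrence
   idx : 'I_k -> 'I_n (0-based positions), and 1-based sorted values
   j_0 = 0, j_1 < ... < j_k, j_{k+1} = n+1. *)
Definition occ_pos (n k : nat) (idx : {ffun 'I_k -> 'I_n}) (x : nat) : nat :=
  nth n.+1 (0 :: [seq (idx a).+1 | a <- enum 'I_k]) x.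

Definition occ_val (n k : nat) (pi : 'S_n) (idx : {ffun 'I_k -> 'I_n}) (y : nat) : nat :=
  nth n.+1 (0 :: sort leq [seq (pi (idx a)).+1 | a <- enum 'I_k]) y.

Definition is_occurrence (n : nat) (pi : 'S_n) (p : bvpat) (idx : {ffun 'I_(bk p) -> 'I_n}) : bool :=
  [&& [forall a : 'I_(bk p), forall b : 'I_(bk p), (a < b) ==> (idx a < idx b)],
      [forall a : 'I_(bk p), forall b : 'I_(bk p),
          (pi (idx a) < pi (idx b)) == (bsig p a < bsig p b)],
      [forall x in bX p, @occ_pos n (bk p) idx x.+1 == (@occ_pos n (bk p) idx x).+1] &
      [forall y in bY p, @occ_val n (bk p) pi idx y.+1 == (@occ_val n (bk p) pi idx y).+1]].

Definition contains (n : nat) (pi : 'S_n) (p : bvpat) : bool :=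
  [exists idx : {ffun 'I_(bk p) -> 'I_n}, @is_occurrence n pi p idx].

Definition avoid_count (p : bvpat) (n : nat) : nat :=
  #|[set pi : 'S_n | ~~ contains pi p]|.

Definition revp (k : nat) : 'S_k := perm (@rev_ord_inj k).

Definition pat_i (p : bvpat) : bvpat := BVPat ((bsig p)^-1)%g (bY p) (bX p).
(* p^r = (sigma^r, {k-x : x in X}, Y), sigma^r_j = sigma_{k+1-j} *)
Definition pat_r (p : bvpat) : bvpat :=
  BVPat (revp (bk p) * bsig p)%g [set rev_ord x | x in bX p] (bY p).
(* p^c = (sigma^c, X, {k-y : y in Y}), sigma^c_j = k+1-sigma_j *)
Definition pat_c (p : bvpat) : bvpat :=
  BVPat (bsig p * revp (bk p))%g (bX p) [set rev_ord y | y in bY p].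

Inductive sym_class (p : bvpat) : bvpat -> Prop :=
  | sym_refl : sym_class p p
  | sym_i q : sym_class p q -> sym_class p (pat_i q)
  | sym_r q : sym_class p q -> sym_class p (pat_r q)
  | sym_c q : sym_class p q -> sym_class p (pat_c q).

Definition pat12_01 : bvpat :=
  @BVPat 2 1%g set0 [set (inord 0 : 'I_3); inord 1].
Definition pat12_02 : bvpat :=
  @BVPat 2 1%g set0 [set (inord 0 : 'I_3); inord 2].

(* Main.v *)
Require Import Defs.
From mathcomp Require Import all_boot all_fingroup.
From mathcomp Require Import zify.
Definition o1 : 'I_2 := @Ordinal 2 1 isT.
Lemma sort2 (a b : nat) : sort leq [:: a; b] = [:: minn a b; maxn a b].
Proof. rewrite /sort /=. case: leqP => h; by rewrite ?merge0s ?mergeS0 //=. Qed.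
Lemma I2cases (i : 'I_2) : i = ord0 \/ i = o1.
Proof. case: i => [[|[|//]]] ?; [left|right]; exact: val_inj. Qed.
Lemma map_enum2 T (f : 'I_2 -> T) : [seq f a | a <- enum 'I_2] = [:: f ord0; f o1].
Proof. rewrite enum_ordSl enum_ordSl enum_ord0 /=. by congr [:: _; f _]; apply: val_inj. Qed.

Definition P3 (n : nat) (l : seq nat) (x : nat) := nth n.+1 l x.+1 == (nth n.+1 l x).+1.

Lemma ltaux (x y a b : nat) : x != y -> a != b -> ((y < x) == (b < a)) = ((x < y) == (a < b)).
Proof. move=> /eqP h1 /eqP h2; case: (ltngtP x y); case: (ltngtP a b); lia. Qed.

Lemma contains2 n (pi : 'S_n) (s : 'S_2) X Y :
  contains pi (@BVPat 2 s X Y) =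
  [exists u : 'I_n, exists v : 'I_n, [&& u < v, (pi u < pi v) == (s ord0 < s o1),
     [forall x in X, P3 n [:: 0; u.+1; v.+1] x] &
     [forall y in Y, P3 n [:: 0; (minn (pi u) (pi v)).+1; (maxn (pi u) (pi v)).+1] y]]].
Proof.
rewrite /contains /is_occurrence /occ_pos /occ_val /=.
have s01 : s ord0 != s o1 by rewrite (inj_eq perm_inj).
apply/existsP/existsP.
- case=> idx /and4P [h1 h2 h3 h4]; exists (idx ord0); apply/existsP; exists (idx o1).
  have lt01 : idx ord0 < idx o1 by exact: (implyP (forallP (forallP h1 ord0) o1)).
  rewrite lt01 /=.
  rewrite (eqP (forallP (forallP h2 ord0) o1)) eqxx /=.
  move: h3 h4; rewrite /P3 /= !map_enum2 sort2 /= -minnSS -maxnSS => -> ->; by rewrite andbT.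
- case=> u /existsP [v /and4P [h1 h2 h3 h4]].
  exists [ffun i => if i == ord0 then u else v].
  rewrite !map_enum2 sort2 !ffunE /=.
  move: h3 h4; rewrite /P3 /= -minnSS -maxnSS => h3 h4.

  rewrite h3 h4 !andbT; apply/andP; split.
  + apply/forallP => a; apply/forallP => b; rewrite !ffunE.
    by case: (I2cases a) => ->; case: (I2cases b) => -> //=.
  + apply/forallP => a; apply/forallP => b; rewrite !ffunE.
    have uv : u != v by rewrite neq_ltn h1.
    have puv : pi u != pi v by rewrite (inj_eq perm_inj).
    case: (I2cases a) => ->; case: (I2cases b) => -> //=; rewrite ?ltnn //.
    by rewrite ltaux.
Qed.

Definition memS (Z : {set 'I_3}) (S : seq nat) := forall i : 'I_3, (i \in Z) = (val i \in S).

Lemma forall_memS (Z : {set 'I_3}) S (Q : nat -> bool) :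
  memS Z S -> all (fun x => x < 3) S -> [forall z in Z, Q z] = all Q S.
Proof.
move=> hZ hS; apply/forallP/allP.
- move=> h x xS; have x3 : x < 3 by exact: (allP hS).
  have := h (Ordinal x3); by rewrite hZ /= xS.
- move=> h z; apply/implyP; rewrite hZ; exact: h.
Qed.

Arguments forall_memS {Z S} Q.

Lemma half_card n (F : 'S_n -> bool) (g : 'S_n -> 'S_n) :
  injective g -> (forall x, F (g x) = ~~ F x) -> #|[set x | F x]| = n`! %/ 2.
Proof.
move=> ig hF.
set A := [set x | F x].
have cA : #|A| + #|~: A| = n`! by rewrite cardsC card_Sn.
have l1 : #|A| <= #|~: A|.
  rewrite -(card_imset _ ig); apply: subset_leq_card; apply/subsetP => y /imsetP [x].
  by rewrite !inE => hx ->; rewrite hF hx.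
have l2 : #|~: A| <= #|A|.
  rewrite -(card_imset _ ig); apply: subset_leq_card; apply/subsetP => y /imsetP [x].
  by rewrite !inE => hx ->; rewrite hF hx.
have -> : n`! = #|A| * 2 by lia.
by rewrite mulnK.
Qed.

Lemma Ykey n (pi : 'S_n) (c d : 'I_n) b : c < d ->
  [exists u : 'I_n, exists v : 'I_n, [&& u < v, (pi u < pi v) == b &
     (minn (pi u) (pi v) == c) && (maxn (pi u) (pi v) == d)]]
  = ((pi^-1 c < pi^-1 d)%g == b).
Proof.
move=> cd; apply/existsP/idP.
- case=> u /existsP [v /and3P [h1 h2 /andP [h3 h4]]].
  case: (ltngtP (pi u) (pi v)) => h.
  + move: h3 h4; rewrite (minn_idPl (ltnW h)) (maxn_idPr (ltnW h)) => h3 h4.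
    have -> : c = pi u by apply: val_inj; exact: (esym (eqP h3)).
    have -> : d = pi v by apply: val_inj; exact: (esym (eqP h4)).
    by rewrite !permK h1 -(eqP h2) h.
  + move: h3 h4; rewrite (minn_idPr (ltnW h)) (maxn_idPl (ltnW h)) => h3 h4.
    have -> : c = pi v by apply: val_inj; exact: (esym (eqP h3)).
    have -> : d = pi u by apply: val_inj; exact: (esym (eqP h4)).
    rewrite !permK -(eqP h2) ltnNge (ltnW h1) /=.
    by rewrite ltnNge (ltnW h).
  + have : u = v by apply: (@perm_inj _ pi); apply: val_inj.
    by move=> e; rewrite e ltnn in h1.
- move=> h.
  have pc : pi (pi^-1 c)%g = c by rewrite permKV.
  have pd : pi (pi^-1 d)%g = d by rewrite permKV.
  have ne : (pi^-1 c)%g != (pi^-1 d)%g.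
    apply/eqP => e; have : c = d by rewrite -pc -pd e.
    by move=> e2; rewrite e2 ltnn in cd.
  case: (ltngtP (pi^-1 c)%g (pi^-1 d)%g) => hl.
  + exists (pi^-1 c)%g; apply/existsP; exists (pi^-1 d)%g.
    rewrite hl pc pd -(eqP h) hl cd /= (minn_idPl (ltnW cd)) (maxn_idPr (ltnW cd)).
    by rewrite !eqxx.
  + exists (pi^-1 d)%g; apply/existsP; exists (pi^-1 c)%g.
    have hl' : (pi^-1 c < pi^-1 d)%g = false by rewrite ltnNge (ltnW hl).
    have cd' : (d < c) = false by rewrite ltnNge (ltnW cd).
    rewrite pc pd -(eqP h) hl' cd' /=.
    by rewrite hl (minn_idPr (ltnW cd)) (maxn_idPl (ltnW cd)) !eqxx.
  + by rewrite -(inj_eq val_inj) /= hl eqxx in ne.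
Qed.

Lemma Xkey n (pi : 'S_n) (c d : 'I_n) b : c < d ->
  [exists u : 'I_n, exists v : 'I_n, [&& u < v, (pi u < pi v) == b &
     (u == c :> nat) && (v == d :> nat)]]
  = ((pi c < pi d) == b).
Proof.
move=> cd; apply/existsP/idP.
- case=> u /existsP [v /and3P [h1 h2 /andP [h3 h4]]].
  have -> : c = u by apply: val_inj; exact: (esym (eqP h3)).
  by have -> : d = v by apply: val_inj; exact: (esym (eqP h4)).
- move=> h; exists c; apply/existsP; exists d; by rewrite cd h !eqxx.
Qed.

Lemma notb_eq (a b : bool) : (~~ a == b) = ~~ (a == b).
Proof. by case: a; case: b. Qed.

Lemma countY n (s : 'S_2) X Y S (c d : 'I_n) : memS X [::] -> memS Y S ->
  all (fun x => x < 3) S -> c < d ->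
  (forall m M, m < M -> all (P3 n [:: 0; m.+1; M.+1]) S = (m == c) && (M == d)) ->
  avoid_count (@BVPat 2 s X Y) n = n`! %/ 2.
Proof.
move=> hX hY hS cd hC.
have hc : forall pi : 'S_n, contains pi (@BVPat 2 s X Y) =
    ((pi^-1 c < pi^-1 d)%g == (s ord0 < s o1)).
  move=> pi; rewrite contains2 -Ykey //; apply: eq_existsb => u; apply: eq_existsb => v.
  rewrite (forall_memS (P3 n _) hX) // (forall_memS (P3 n _) hY) //=.
  case h: (u < v) => //=.
  have ne : (pi u : nat) != pi v by rewrite (inj_eq val_inj) (inj_eq perm_inj) neq_ltn h.
  rewrite hC //; lia.
rewrite /avoid_count.
have -> : [set pi : 'S_n | ~~ contains pi (@BVPat 2 s X Y)] =
   [set pi : 'S_n | ~~ ((pi^-1 c < pi^-1 d)%g == (s ord0 < s o1))].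
  by apply/setP => pi; rewrite !inE hc.
apply: (@half_card n _ (fun pi => pi * tperm c d)%g); first exact: mulIg.
move=> pi /=; rewrite invgM tpermV !permM tpermL tpermR.
have ne : (pi^-1 c)%g != (pi^-1 d)%g.
  by rewrite (inj_eq perm_inj) neq_ltn cd.
have -> : ((pi^-1 d)%g < (pi^-1 c)%g) = ~~ ((pi^-1 c)%g < (pi^-1 d)%g).
  move: ne; rewrite -(inj_eq val_inj) /=; lia.
by rewrite notb_eq.
Qed.

Lemma countX n (s : 'S_2) X Y S (c d : 'I_n) : memS Y [::] -> memS X S ->
  all (fun x => x < 3) S -> c < d ->
  (forall m M, m < M -> all (P3 n [:: 0; m.+1; M.+1]) S = (m == c) && (M == d)) ->
  avoid_count (@BVPat 2 s X Y) n = n`! %/ 2.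
Proof.
move=> hY hX hS cd hC.
have hc : forall pi : 'S_n, contains pi (@BVPat 2 s X Y) =
    ((pi c < pi d) == (s ord0 < s o1)).
  move=> pi; rewrite contains2 -Xkey //; apply: eq_existsb => u; apply: eq_existsb => v.
  rewrite (forall_memS (P3 n _) hX) // (forall_memS (P3 n _) hY) //= andbT.
  case h: (u < v) => //=.
  by rewrite hC.
rewrite /avoid_count.
have -> : [set pi : 'S_n | ~~ contains pi (@BVPat 2 s X Y)] =
   [set pi : 'S_n | ~~ ((pi c < pi d) == (s ord0 < s o1))].
  by apply/setP => pi; rewrite !inE hc.
apply: (@half_card n _ (fun pi => tperm c d * pi)%g); first exact: mulgI.
move=> pi /=; rewrite !permM tpermL tpermR.
have ne : pi c != pi d.
  by rewrite (inj_eq perm_inj) neq_ltn cd.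
have -> : (pi d < pi c) = ~~ (pi c < pi d).
  move: ne; rewrite -(inj_eq val_inj) /=; lia.
by rewrite notb_eq.
Qed.

Definition goodS (S : seq nat) :=
  S \in [:: [:: 0; 1]; [:: 1; 0]; [:: 1; 2]; [:: 2; 1]; [:: 0; 2]; [:: 2; 0]].

Lemma goodS_cases S : goodS S -> S = [:: 0; 1] \/ S = [:: 1; 0] \/ S = [:: 1; 2] \/ S = [:: 2; 1] \/ S = [:: 0; 2] \/ S = [:: 2; 0].
Proof.
rewrite /goodS !inE.
by move=> /orP[/eqP->|/orP[/eqP->|/orP[/eqP->|/orP[/eqP->|/orP[/eqP->|/eqP->]]]]]; tauto.
Qed.

Lemma goodS_lt3 S : goodS S -> all (fun x => x < 3) S.
Proof. by move/goodS_cases => [->|[->|[->|[->|[->|->]]]]]. Qed.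

Lemma goodS_rev S : goodS S -> goodS (map (subn 2) S).
Proof. by move/goodS_cases => [->|[->|[->|[->|[->|->]]]]]. Qed.

Lemma goodS_cd n S : 2 <= n -> goodS S -> exists c d : 'I_n, c < d /\
  (forall m M, m < M -> all (P3 n [:: 0; m.+1; M.+1]) S = (m == c) && (M == d)).
Proof.
move=> n2 hS.
have h0 : 0 < n by lia.
have h1 : 1 < n by lia.
have h2 : n - 2 < n by lia.
have h3 : n - 1 < n by lia.
move: hS; move/goodS_cases => [->|[->|[->|[->|[->|->]]]]].
- exists (Ordinal h0), (Ordinal h1); split=> //= m M mM; rewrite /P3 /=; lia.
- exists (Ordinal h0), (Ordinal h1); split=> //= m M mM; rewrite /P3 /=; lia.
- exists (Ordinal h2), (Ordinal h3); split=> [/=|m M mM]; [lia|rewrite /P3 /=; lia].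
- exists (Ordinal h2), (Ordinal h3); split=> [/=|m M mM]; [lia|rewrite /P3 /=; lia].
- exists (Ordinal h0), (Ordinal h3); split=> [/=|m M mM]; [lia|rewrite /P3 /=; lia].
- exists (Ordinal h0), (Ordinal h3); split=> [/=|m M mM]; [lia|rewrite /P3 /=; lia].
Qed.

Lemma memS_rev (Z : {set 'I_3}) S : memS Z S -> all (fun x => x < 3) S ->
  memS [set rev_ord x | x in Z] (map (subn 2) S).
Proof.
move=> hZ hS i.
have -> : (i \in [set rev_ord x | x in Z]) = (rev_ord i \in Z).
  by rewrite -{1}[i]rev_ordK mem_imset //; apply: rev_ord_inj.
rewrite hZ /=; apply/idP/mapP.
- move=> h; exists (3 - i.+1) => //; have := ltn_ord i; lia.
- case=> x xS ->; have x3 : x < 3 by exact: (allP hS).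
  by have -> : 3 - (2 - x).+1 = x by lia.
Qed.

Definition Inv (q : bvpat) := exists (s : 'S_2) (X Y : {set 'I_3}) S,
  q = @BVPat 2 s X Y /\ goodS S /\
  ((memS X [::] /\ memS Y S) \/ (memS Y [::] /\ memS X S)).

Lemma Inv_i q : Inv q -> Inv (pat_i q).
Proof.
case=> s [X [Y [S [-> [gS [[h1 h2]|[h1 h2]]]]]]].
- exists (s^-1)%g, Y, X, S; split=> //; split=> //; by right.
- exists (s^-1)%g, Y, X, S; split=> //; split=> //; by left.
Qed.

Lemma Inv_r q : Inv q -> Inv (pat_r q).
Proof.
case=> s [X [Y [S [-> [gS [[h1 h2]|[h1 h2]]]]]]].
- exists (revp 2 * s)%g, [set rev_ord x | x in X], Y, S; split=> //; split=> //.
  left; split=> //; exact: (@memS_rev X [::]).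
- exists (revp 2 * s)%g, [set rev_ord x | x in X], Y, (map (subn 2) S); split=> //.
  split; first exact: goodS_rev.
  right; split=> //; apply: memS_rev => //; exact: goodS_lt3.
Qed.

Lemma Inv_c q : Inv q -> Inv (pat_c q).
Proof.
case=> s [X [Y [S [-> [gS [[h1 h2]|[h1 h2]]]]]]].
- exists (s * revp 2)%g, X, [set rev_ord y | y in Y], (map (subn 2) S); split=> //.
  split; first exact: goodS_rev.
  left; split=> //; apply: memS_rev => //; exact: goodS_lt3.
- exists (s * revp 2)%g, X, [set rev_ord y | y in Y], S; split=> //; split=> //.
  right; split=> //; exact: (@memS_rev Y [::]).
Qed.

Lemma Inv_class p q : Inv p -> sym_class p q -> Inv q.
Proof.
move=> hp; elim=> [//|q' _ IH|q' _ IH|q' _ IH]; [exact: Inv_i|exact: Inv_r|exact: Inv_c].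
Qed.

Lemma Inv_count q n : Inv q -> 2 <= n -> avoid_count q n = n`! %/ 2.
Proof.
case=> s [X [Y [S [-> [gS hh]]]]] n2.
have [c [d [cd hC]]] := @goodS_cd n S n2 gS.
have lt3 := goodS_lt3 _ gS.
case: hh => [[h1 h2]|[h1 h2]].
- exact: (countY _ _ _ _ _ _ _ h1 h2 lt3 cd hC).
- exact: (countX _ _ _ _ _ _ _ h1 h2 lt3 cd hC).
Qed.

Lemma memS0 : memS set0 [::].
Proof. by move=> i; rewrite inE. Qed.

Lemma Inv01 : Inv pat12_01.
Proof.
exists 1%g, set0, [set (inord 0 : 'I_3); inord 1], [:: 0; 1]; split=> //; split=> //.
left; split; first exact: memS0.
move=> i; rewrite !inE -!(inj_eq val_inj) /= !inordK //; by case: i => [[|[|[|]]]].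
Qed.

Lemma Inv02 : Inv pat12_02.
Proof.
exists 1%g, set0, [set (inord 0 : 'I_3); inord 2], [:: 0; 2]; split=> //; split=> //.
left; split; first exact: memS0.
move=> i; rewrite !inE -!(inj_eq val_inj) /= !inordK //; by case: i => [[|[|[|]]]].
Qed.

Theorem mainTheorem3 (p : bvpat) :
  sym_class pat12_01 p \/ sym_class pat12_02 p ->
  forall n : nat, 2 <= n -> avoid_count p n = n`! %/ 2.
Proof.
case=> h n n2; apply: Inv_count => //.
- exact: (Inv_class _ _ Inv01 h).
- exact: (Inv_class _ _ Inv02 h).
Qed.
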